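(* Consider the Bellman problem: find $v\in\mathbb{R}^M$ with $\sup_{P\in\mathcal{P}}\{-A(P)v+b(P)\}=0$. Assume (H0), that $A$ and $b$ are bounded on $\mathcal{P}$, and that $A(P)$ is a monotone matrix for every $P\in\mathcal{P}$. Then for any $v^0\in\mathbb{R}^M$ and any positive summable sequence $(\epsilon^\ell)$, the sequence $(v^\ell)_{\ell\ge1}$ produced by $\epsilon$-policy iteration converges to $v$, the unique solution of the Bellman problem (in particular a solution exists).
   Context: $\mathcal{P}=\prod_{i=1}^M\mathcal{P}_i$ is a product of nonempty sets; $A:\mathcal{P}\to\mathbb{R}^{M\times M}$ and $b:\mathcal{P}\to\mathbb{R}^M$ are row-decoupled: row $i$ of $A(P)$ and $[b(P)]_i$ depend only on $P_i$. Order on $\mathbb{R}^M$ and suprema are componentwise. A real square matrix $A$ is monotone if $Av\ge0$ implies $v\ge0$. (H0): $P\mapsto A(P)^{-1}$ is bounded on $\{P\in\mathcal{P}: A(P)\text{ nonsingular}\}$. For $x\in\mathbb{R}^M$ and $c\in\mathbb{R}$, $x+c$ adds $c$ to each component. $\epsilon$-policy iteration: pick a sequence $\epsilon^\ell>0$ with $\sum_{\ell\ge1}\epsilon^\ell<\infty$; for $\ell=1,2,\dots$ choose $P^\ell\in\mathcal{P}$ with $-A(P^\ell)v^{\ell-1}+b(P^\ell)+\epsilon^\ell\ge\sup_{P\in\mathcal{P}}\{-A(P)v^{\ell-1}+b(P)\}$, and let $v^\ell$ be the exact solution of $A(P^\ell)v^\ell=b(P^\ell)$. *)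

(* Defs.v *)
From Stdlib Require Import Reals Lra Lia List.
Open Scope R_scope.

(* Vectors in R^M are functions nat -> R (only indices i < M matter);
   M x M matrices are functions nat -> nat -> R. *)

Definition sumM (M : nat) (f : nat -> R) : R :=
  fold_right Rplus 0 (map f (seq 0 M)).

Definition mv (M : nat) (A : nat -> nat -> R) (v : nat -> R) : nat -> R :=
  fun i => sumM M (fun j => A i j * v j).

Definition mm (M : nat) (A B : nat -> nat -> R) : nat -> nat -> R :=
  fun i k => sumM M (fun j => A i j * B j k).

Definition idm : nat -> nat -> R := fun i j => if Nat.eqb i j then 1 else 0.

Definition is_inverse (M : nat) (A B : nat -> nat -> R) : Prop :=
  forall i k, (i < M)%nat -> (k < M)%nat ->
    mm M A B i k = idm i k /\ mm M B A i k = idm i k.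

Definition nonsingular (M : nat) (A : nat -> nat -> R) : Prop :=
  exists B, is_inverse M A B.

Definition monotone_mx (M : nat) (A : nat -> nat -> R) : Prop :=
  forall v : nat -> R,
    (forall i, (i < M)%nat -> 0 <= mv M A v i) ->
    forall i, (i < M)%nat -> 0 <= v i.

(* Row-decoupled data: a policy P is an element of the product
   prod_i Pol i, i.e. P : forall i, Pol i.  Row i of A(P) is a i (P i),
   and [b(P)]_i is bb i (P i). *)
Definition Amat (Pol : nat -> Type) (a : forall i, Pol i -> nat -> R)
  (P : forall i, Pol i) : nat -> nat -> R := fun i j => a i (P i) j.

Definition bvec (Pol : nat -> Type) (bb : forall i, Pol i -> R)
  (P : forall i, Pol i) : nat -> R := fun i => bb i (P i).

Definition resid (M : nat) (Pol : nat -> Type) (a : forall i, Pol i -> nat -> R)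
  (bb : forall i, Pol i -> R) (P : forall i, Pol i) (v : nat -> R) : nat -> R :=
  fun i => - mv M (Amat Pol a P) v i + bvec Pol bb P i.

Definition is_sup_resid (M : nat) (Pol : nat -> Type) (a : forall i, Pol i -> nat -> R)
  (bb : forall i, Pol i -> R) (v s : nat -> R) : Prop :=
  forall i, (i < M)%nat ->
    is_lub (fun x => exists P : forall k, Pol k, x = resid M Pol a bb P v i) (s i).

Definition bellman_sol (M : nat) (Pol : nat -> Type) (a : forall i, Pol i -> nat -> R)
  (bb : forall i, Pol i -> R) (v : nat -> R) : Prop :=
  is_sup_resid M Pol a bb v (fun _ => 0).

Definition H0 (M : nat) (Pol : nat -> Type) (a : forall i, Pol i -> nat -> R) : Prop :=
  exists C : R, forall (P : forall i, Pol i) (B : nat -> nat -> R),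
    is_inverse M (Amat Pol a P) B ->
    forall i j, (i < M)%nat -> (j < M)%nat -> Rabs (B i j) <= C.

Definition bounded_data (M : nat) (Pol : nat -> Type) (a : forall i, Pol i -> nat -> R)
  (bb : forall i, Pol i -> R) : Prop :=
  exists K : R, forall (P : forall i, Pol i) i, (i < M)%nat ->
    Rabs (bvec Pol bb P i) <= K /\
    forall j, (j < M)%nat -> Rabs (Amat Pol a P i j) <= K.

Definition eps_policy_iteration (M : nat) (Pol : nat -> Type)
  (a : forall i, Pol i -> nat -> R) (bb : forall i, Pol i -> R)
  (eps : nat -> R) (pol : nat -> forall i, Pol i) (vs : nat -> nat -> R) : Prop :=
  forall l, (1 <= l)%nat ->
    (exists s, is_sup_resid M Pol a bb (vs (l - 1)%nat) s /\
       forall i, (i < M)%nat ->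
         resid M Pol a bb (pol l) (vs (l - 1)%nat) i + eps l >= s i) /\
    (forall i, (i < M)%nat ->
       mv M (Amat Pol a (pol l)) (vs l) i = bvec Pol bb (pol l) i).

(* Main.v *)
Require Import Defs.
From Stdlib Require Import Reals Lra Lia List IndefiniteDescription Classical.
Open Scope R_scope.

Definition sL (L : list nat) (f : nat -> R) : R := fold_right Rplus 0 (map f L).

Lemma sL_ext L f g : (forall j, In j L -> f j = g j) -> sL L f = sL L g.
Proof. induction L as [|x L IH]; simpl; intros H; auto.
  unfold sL in *; simpl. rewrite H by auto. rewrite IH; auto. Qed.

Lemma sL_plus L f g : sL L (fun j => f j + g j) = sL L f + sL L g.
Proof. induction L as [|x L IH]; unfold sL in *; simpl; [lra|]. rewrite IH; lra. Qed.

Lemma sL_minus L f g : sL L (fun j => f j - g j) = sL L f - sL L g.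
Proof. induction L as [|x L IH]; unfold sL in *; simpl; [lra|]. rewrite IH; lra. Qed.

Lemma sL_scal L c f : sL L (fun j => c * f j) = c * sL L f.
Proof. induction L as [|x L IH]; unfold sL in *; simpl; [lra|]. rewrite IH; lra. Qed.

Lemma sL_le L f g : (forall j, In j L -> f j <= g j) -> sL L f <= sL L g.
Proof. induction L as [|x L IH]; unfold sL in *; simpl; intros H; [lra|].
  assert (f x <= g x) by auto. assert (fold_right Rplus 0 (map f L) <= fold_right Rplus 0 (map g L)) by auto. lra. Qed.

Lemma sL_swap L1 L2 (F : nat -> nat -> R) :
  sL L1 (fun j => sL L2 (fun k => F j k)) = sL L2 (fun k => sL L1 (fun j => F j k)).
Proof. induction L1 as [|x L1 IH].
  - unfold sL; simpl. induction L2; simpl; auto. rewrite <- IHL2. lra.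
  - change (sL (x :: L1) (fun j => sL L2 (fun k => F j k))) with
      (sL L2 (fun k => F x k) + sL L1 (fun j => sL L2 (fun k => F j k))).
    rewrite IH. rewrite <- sL_plus. apply sL_ext. intros; reflexivity. Qed.

Lemma sL_abs L f : Rabs (sL L f) <= sL L (fun j => Rabs (f j)).
Proof. induction L as [|x L IH]; unfold sL in *; simpl.
  - rewrite Rabs_R0; lra.
  - eapply Rle_trans; [apply Rabs_triang|]. lra. Qed.

Lemma sL_const L c : sL L (fun _ => c) = INR (length L) * c.
Proof. induction L as [|x L IH]; unfold sL in *; simpl; [lra|].
  rewrite IH. destruct (length L); simpl; lra. Qed.

Lemma sumM_sL M f : sumM M f = sL (seq 0 M) f.
Proof. reflexivity. Qed.

Lemma in_seq0 M j : In j (seq 0 M) -> (j < M)%nat.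
Proof. intros H; apply in_seq in H; lia. Qed.

Lemma sumM_ext M f g : (forall j, (j < M)%nat -> f j = g j) -> sumM M f = sumM M g.
Proof. intros H; apply sL_ext; intros j Hj; apply H, in_seq0; auto. Qed.

Lemma sumM_le M f g : (forall j, (j < M)%nat -> f j <= g j) -> sumM M f <= sumM M g.
Proof. intros H; apply sL_le; intros j Hj; apply H, in_seq0; auto. Qed.

Lemma sumM_const M c : sumM M (fun _ => c) = INR M * c.
Proof. unfold sumM; fold (sL (seq 0 M) (fun _ => c)). rewrite sL_const, length_seq; auto. Qed.

Lemma mv_minus M A x y i : mv M A (fun j => x j - y j) i = mv M A x i - mv M A y i.
Proof. unfold mv. rewrite !sumM_sL, <- sL_minus. apply sL_ext; intros; ring. Qed.

Lemma mv_opp M A x i : mv M A (fun j => - x j) i = - mv M A x i.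
Proof. unfold mv. rewrite !sumM_sL. replace (- sL (seq 0 M) (fun j => A i j * x j))
  with ((-1) * sL (seq 0 M) (fun j => A i j * x j)) by ring. rewrite <- sL_scal.
  apply sL_ext; intros; ring. Qed.

Lemma mv_mv M A B w i : mv M A (mv M B w) i = sumM M (fun k => mm M A B i k * w k).
Proof. unfold mv, mm. rewrite !sumM_sL.
  transitivity (sL (seq 0 M) (fun j => sL (seq 0 M) (fun k => A i j * (B j k * w k)))).
  - apply sL_ext; intros. rewrite sumM_sL, <- sL_scal. reflexivity.
  - rewrite sL_swap. apply sL_ext; intros. rewrite sumM_sL.
    rewrite Rmult_comm, <- sL_scal. apply sL_ext; intros; ring. Qed.

Lemma mv_abs M A x i K : (forall j, (j < M)%nat -> Rabs (A i j) <= K) ->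
  Rabs (mv M A x i) <= K * sumM M (fun j => Rabs (x j)).
Proof. intros H. unfold mv. eapply Rle_trans; [apply sL_abs|].
  rewrite sumM_sL, <- sL_scal. apply sL_le; intros j Hj.
  rewrite Rabs_mult. apply Rmult_le_compat_r; [apply Rabs_pos|]. apply H, in_seq0; auto. Qed.

Lemma sumM_nonneg M f : (forall j, (j < M)%nat -> 0 <= f j) -> 0 <= sumM M f.
Proof. intros H. replace 0 with (sumM M (fun _ => 0)). apply sumM_le; auto.
  rewrite sumM_const; ring. Qed.


Lemma sumM_S M f : sumM (S M) f = sumM M f + f M.
Proof. unfold sumM. rewrite seq_S, map_app, fold_right_app. simpl.
  generalize (map f (seq 0 M)). intros l; induction l; simpl; [lra|]. rewrite IHl; lra. Qed.

Lemma sumM_idm M i f : (i < M)%nat -> sumM M (fun k => idm i k * f k) = f i.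
Proof. induction M as [|M IH]; intros Hi; [lia|].
  rewrite sumM_S. unfold idm at 2. destruct (Nat.eqb_spec i M) as [E|E].
  - subst i. replace (sumM M (fun k => idm M k * f k)) with (sumM M (fun _ => 0)).
    + rewrite sumM_const; ring.
    + apply sumM_ext; intros j Hj. unfold idm. destruct (Nat.eqb_spec M j); [lia|ring].
  - rewrite IH by lia. ring. Qed.

Lemma inv_nonneg M A B : monotone_mx M A -> is_inverse M A B ->
  forall j k, (j < M)%nat -> (k < M)%nat -> 0 <= B j k.
Proof. intros Hm Hinv j k Hj Hk. apply (Hm (fun j => B j k)); auto.
  intros i Hi. unfold mv. change (0 <= mm M A B i k). rewrite (proj1 (Hinv i k Hi Hk)).
  unfold idm; destruct (Nat.eqb i k); lra. Qed.

Lemma key_bound M A B C x c : monotone_mx M A -> is_inverse M A B ->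
  (forall i j, (i < M)%nat -> (j < M)%nat -> Rabs (B i j) <= C) ->
  (forall i, (i < M)%nat -> mv M A x i <= c) -> 0 <= c ->
  forall j, (j < M)%nat -> x j <= INR M * Rmax C 0 * c.
Proof. intros Hm Hinv HC Hx Hc j Hj.
  set (u := fun j => sumM M (fun k => B j k * c)).
  assert (Hu : forall i, (i < M)%nat -> mv M A u i = c).
  { intros i Hi. unfold u. change (mv M A (mv M B (fun _ => c)) i = c).
    rewrite mv_mv. transitivity (sumM M (fun k => idm i k * c)).
    - apply sumM_ext; intros k Hk. rewrite (proj1 (Hinv i k Hi Hk)). reflexivity.
    - apply (sumM_idm M i (fun _ => c)); auto. }
  assert (H1 : 0 <= u j - x j).
  { apply (Hm (fun j => u j - x j)); auto. intros i Hi. rewrite mv_minus, Hu by auto.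
    specialize (Hx i Hi); lra. }
  assert (H2 : u j <= INR M * Rmax C 0 * c).
  { unfold u. rewrite Rmult_assoc, <- sumM_const. apply sumM_le; intros k Hk.
    apply Rmult_le_compat_r; auto. eapply Rle_trans; [apply Rle_abs|].
    eapply Rle_trans; [apply HC; auto|apply Rmax_l]. }
  lra. Qed.

Lemma le0_of_small x : (forall d, d > 0 -> x <= d) -> x <= 0.
Proof. intros H. destruct (Rle_or_lt x 0); auto. specialize (H (x/2)). lra. Qed.

Lemma le0_of_smallG x G : 0 <= G -> (forall d, d > 0 -> x <= G * d) -> x <= 0.
Proof. intros HG H. apply le0_of_small. intros d Hd. eapply Rle_trans.
  apply (H (d / (G+1))). apply Rdiv_lt_0_compat; lra.
  unfold Rdiv. rewrite <- Rmult_assoc. apply Rle_trans with (1 * d); [|lra].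
  rewrite (Rmult_comm G d), Rmult_assoc. rewrite (Rmult_comm d). apply Rmult_le_compat_r; [lra|].
  apply Rmult_le_reg_r with (G+1); [lra|]. rewrite Rmult_assoc, Rinv_l by lra. lra. Qed.


Lemma cv_shift1 f L : Un_cv (fun n => f (S n)) L -> Un_cv f L.
Proof. intros H e He. destruct (H e He) as [N HN]. exists (S N). intros n Hn.
  destruct n; [lia|]. apply HN; lia. Qed.

Lemma cv_ext f g L : (forall n, f n = g n) -> Un_cv f L -> Un_cv g L.
Proof. intros E H e He. destruct (H e He) as [N HN]. exists N. intros n Hn.
  rewrite <- E. auto. Qed.

Lemma Rabs_le_both x y : Rabs x <= y -> - y <= x <= y.
Proof. intros H. generalize (Rle_abs x) (Rle_abs (-x)). rewrite Rabs_Ropp. lra. Qed.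

Lemma cv_const c : Un_cv (fun _ => c) c.
Proof. intros e He. exists O. intros. unfold Rdist. rewrite Rminus_diag, Rabs_R0; auto. Qed.

Lemma cv_abs_sub x v : Un_cv x v -> Un_cv (fun l => Rabs (x l - v)) 0.
Proof. intros H e He. destruct (H e He) as [N HN]. exists N. intros n Hn.
  specialize (HN n Hn). unfold Rdist in *. rewrite Rminus_0_r, Rabs_Rabsolu. auto. Qed.

Lemma cv_sL (x : nat -> nat -> R) v L : (forall j, In j L -> Un_cv (fun l => x l j) (v j)) ->
  Un_cv (fun l => sL L (fun j => Rabs (x l j - v j))) 0.
Proof. induction L as [|j L IH]; intros H.
  - intros e He. exists O. intros. unfold sL, Rdist; simpl. rewrite Rminus_0_r, Rabs_R0; auto.
  - replace 0 with (0 + 0) by ring.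
    apply (cv_ext (fun l => Rabs (x l j - v j) + sL L (fun j => Rabs (x l j - v j)))).
    + intros; reflexivity.
    + apply CV_plus. apply cv_abs_sub, H; simpl; auto. apply IH; intros; apply H; simpl; auto. Qed.

Lemma cv_small f : Un_cv f 0 -> forall d, d > 0 -> exists N, forall n, (n >= N)%nat -> f n < d.
Proof. intros H d Hd. destruct (H d Hd) as [N HN]. exists N. intros n Hn.
  specialize (HN n Hn). unfold Rdist in HN. rewrite Rminus_0_r in HN.
  eapply Rle_lt_trans; [apply Rle_abs|exact HN]. Qed.

Lemma Kd_small K d e : 0 <= K -> 0 <= d -> d < e / (4 * (K + 1)) -> K * d <= e / 4.
Proof. intros HK Hd H. assert (E : (K + 1) * (e / (4 * (K + 1))) = e / 4) by (field; lra).
  apply Rle_trans with ((K+1) * d); [nra|]. rewrite <- E.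
  apply Rmult_le_compat_l; lra. Qed.

Lemma near_opt M Pol a bb (P0 : forall k, Pol k) w d : bellman_sol M Pol a bb w -> d > 0 ->
  exists P : forall k, Pol k, forall i, (i < M)%nat -> resid M Pol a bb P w i > - d.
Proof. intros Hw Hd.
  assert (H : forall i, exists Q : forall k, Pol k, (i < M)%nat -> resid M Pol a bb Q w i > - d).
  { intros i. destruct (Compare_dec.lt_dec i M) as [Hi|Hi]; [|exists P0; intros; lia].
    destruct (classic (exists Q : forall k, Pol k, resid M Pol a bb Q w i > - d)) as [[Q HQ]|HN].
    - exists Q; auto.
    - exfalso. destruct (Hw i Hi) as [_ Hl]. assert (0 <= - d); [|lra]. apply Hl.
      intros x [Q ->]. apply Rnot_lt_le. intros Hc. apply HN. exists Q. exact Hc. }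
  destruct (functional_choice _ H) as [f Hf]. exists (fun i => f i i).
  intros i Hi. exact (Hf i Hi). Qed.

Lemma main_lemma (M : nat) (Pol : nat -> Type)
  (a : forall i, Pol i -> nat -> R) (bb : forall i, Pol i -> R)
  (Hns : forall P, nonsingular M (Amat Pol a P))
  (HH0 : H0 M Pol a)
  (Hbd : bounded_data M Pol a bb)
  (Hmono : forall P : forall i, Pol i, monotone_mx M (Amat Pol a P))
  (eps : nat -> R)
  (Heps_pos : forall l, (1 <= l)%nat -> 0 < eps l)
  (Heps_sum : exists sig, infinite_sum (fun n => eps (S n)) sig)
  (pol : nat -> forall i, Pol i) (vs : nat -> nat -> R)
  (Hiter : eps_policy_iteration M Pol a bb eps pol vs) (HM : (0 < M)%nat) :
  exists v : nat -> R,
    bellman_sol M Pol a bb v /\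
    (forall w, bellman_sol M Pol a bb w -> forall i, (i < M)%nat -> w i = v i) /\
    (forall i, (i < M)%nat -> Un_cv (fun l => vs l i) (v i)).
Proof.
  destruct HH0 as [C HC]. destruct Hbd as [K HK]. destruct Heps_sum as [sig Hsig].
  set (G := INR M * Rmax C 0).
  assert (HG : 0 <= G) by (apply Rmult_le_pos; [apply pos_INR|apply Rmax_r]).
  assert (HK0 : 0 <= K) by (destruct (HK (pol O) O HM) as [h _]; eapply Rle_trans; [apply Rabs_pos|exact h]).
  assert (Bnd : forall P x c, (forall i, (i<M)%nat -> mv M (Amat Pol a P) x i <= c) -> 0 <= c ->
            forall j, (j<M)%nat -> x j <= G * c).
  { intros P x c Hx Hc j Hj. destruct (Hns P) as [B HB]. eapply key_bound; eauto. }
  assert (Aabs : forall P i x, (i<M)%nat ->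
            Rabs (mv M (Amat Pol a P) x i) <= K * sumM M (fun j => Rabs (x j))).
  { intros P i x Hi. apply mv_abs. intros j Hj. apply (proj2 (HK P i Hi) j Hj). }
  assert (Hsol : forall l, (1 <= l)%nat -> forall i, (i<M)%nat ->
            mv M (Amat Pol a (pol l)) (vs l) i = bvec Pol bb (pol l) i)
    by (intros; apply Hiter; auto).
  assert (Rbd : forall l, (1<=l)%nat -> forall j, (j<M)%nat -> Rabs (vs l j) <= G*K).
  { intros l Hl j Hj. apply Rabs_le. split.
    - assert (- vs l j <= G*K); [|lra]. apply (Bnd (pol l) (fun j => - vs l j) K); auto.
      intros i Hi. rewrite mv_opp, Hsol by auto. destruct (HK (pol l) i Hi) as [h _].
      generalize (Rle_abs (- bvec Pol bb (pol l) i)). rewrite Rabs_Ropp. lra.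
    - apply (Bnd (pol l) (vs l) K); auto. intros i Hi. rewrite Hsol by auto.
      eapply Rle_trans; [apply Rle_abs|apply HK; auto]. }
  assert (Step : forall n j, (j<M)%nat -> vs (S n) j - vs (S (S n)) j <= G * eps (S (S n))).
  { intros n j Hj. destruct (Hiter (S (S n))) as [[s [Hs Hle]] _]; [lia|].
    replace (S (S n) - 1)%nat with (S n) in * by lia.
    apply (Bnd (pol (S (S n))) (fun j => vs (S n) j - vs (S (S n)) j) (eps (S (S n)))); auto;
      [|left; apply Heps_pos; lia].
    intros i Hi. rewrite mv_minus. rewrite Hsol by lia.
    specialize (Hle i Hi). assert (H0s : 0 <= s i).
    { destruct (Hs i Hi) as [Hub _]. replace 0 with (resid M Pol a bb (pol (S n)) (vs (S n)) i).
      apply Hub. exists (pol (S n)); reflexivity.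
      unfold resid. rewrite Hsol by lia. ring. }
    unfold resid in Hle. lra. }
  set (e := fun n => eps (S n)).
  assert (Hgs : Un_growing (fun n => sum_f_R0 e n)).
  { intros n. unfold e. assert (0 < eps (S (S n))) by (apply Heps_pos; lia); change (sum_f_R0 (fun n => eps (S n)) (S n)) with (sum_f_R0 (fun n => eps (S n)) n + eps (S (S n))); lra. }
  assert (Hsle : forall n, sum_f_R0 e n <= sig) by (apply growing_ineq; auto).
  assert (Htail : Un_cv (fun n => sig - sum_f_R0 e n) 0).
  { intros d Hd. destruct (Hsig d Hd) as [N HN]. exists N. intros n Hn.
    specialize (HN n Hn). unfold Rdist in *. rewrite Rminus_0_r, <- Rabs_Ropp.
    replace (- (sig - sum_f_R0 e n)) with (sum_f_R0 e n - sig) by ring. exact HN. }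
  assert (Heps0 : forall d, d > 0 -> exists N, forall n, (n >= N)%nat -> eps n < d).
  { intros d Hd. destruct (Hsig (d/2)) as [N HN]; [lra|]. exists (S (S N)). intros n Hn.
    destruct n as [|[|n]]; [lia|lia|].
    generalize (HN n ltac:(lia)) (HN (S n) ltac:(lia)). unfold Rdist.
    change (sum_f_R0 (fun n => eps (S n)) (S n)) with (sum_f_R0 (fun n => eps (S n)) n + eps (S (S n))).
    intros h1 h2. apply Rabs_def2 in h1. apply Rabs_def2 in h2. lra. }
  assert (Hcv : forall i, (i<M)%nat -> exists L, Un_cv (fun l => vs l i) L).
  { intros i Hi. set (u := fun n => vs (S n) i - G * (sig - sum_f_R0 e n)).
    assert (Hug : Un_growing u).
    { intros n. unfold u. change (sum_f_R0 e (S n)) with (sum_f_R0 e n + e (S n)).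
      generalize (Step n i Hi). unfold e.
      assert (E : G * (sig - (sum_f_R0 (fun n => eps (S n)) n + eps (S (S n)))) =
                  G * (sig - sum_f_R0 (fun n => eps (S n)) n) - G * eps (S (S n))) by ring.
      rewrite E. intros; lra. }
    assert (Hub : has_ub u).
    { exists (G*K). intros x [n ->]. unfold u.
      generalize (Rbd (S n) ltac:(lia) i Hi); intros h. generalize (Rle_abs (vs (S n) i)); intros h3.
      assert (0 <= G * (sig - sum_f_R0 e n)) by (apply Rmult_le_pos; auto; generalize (Hsle n); lra).
      lra. }
    destruct (growing_cv u Hug Hub) as [L HL]. exists (L + G * 0).
    apply cv_shift1. eapply cv_ext; [|apply (CV_plus _ _ _ _ HL (CV_mult (fun _ => G) _ G 0 (cv_const G) Htail))].
    intros n; simpl. unfold u. ring. }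
  assert (Hv : exists v : nat -> R, forall i, (i<M)%nat -> Un_cv (fun l => vs l i) (v i)).
  { apply (functional_choice (fun i L => (i<M)%nat -> Un_cv (fun l => vs l i) L)). intros i.
    destruct (Compare_dec.lt_dec i M) as [h|h].
    - destruct (Hcv i h) as [L HL]; exists L; auto.
    - exists 0; intros; lia. }
  destruct Hv as [v Hv].
  set (d := fun l => sumM M (fun j => Rabs (vs l j - v j))).
  assert (Hd : Un_cv d 0).
  { apply cv_sL. intros j Hj. apply Hv, in_seq0; auto. }
  assert (Hd0 : forall l, 0 <= d l) by (intros; apply sumM_nonneg; intros; apply Rabs_pos).
  assert (Hdiff : forall l l', sumM M (fun j => Rabs (vs l j - vs l' j)) <= d l + d l').
  { intros l l'. unfold d. rewrite !sumM_sL, <- sL_plus. apply sL_le. intros j Hj0. assert (Hj : (j < M)%nat) by (apply in_seq0; auto). clear Hj0. 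
    replace (vs l j - vs l' j) with ((vs l j - v j) + - (vs l' j - v j)) by ring.
    eapply Rle_trans; [apply Rabs_triang|]. rewrite Rabs_Ropp. lra. }
  assert (Hbell : bellman_sol M Pol a bb v).
  { intros i Hi. split.
    - intros x [P ->]. apply le0_of_small. intros δ Hδ.
      destruct (cv_small d Hd (δ / (4 * (K + 1)))) as [N1 HN1].
      { apply Rdiv_lt_0_compat; lra. }
      destruct (Heps0 (δ/4)) as [N2 HN2]; [lra|].
      set (l := S (N1 + N2)).
      destruct (Hiter l) as [[s [Hs Hle]] _]; [unfold l; lia|].
      replace (l - 1)%nat with (N1 + N2)%nat in * by (unfold l; lia).
      assert (E1 : resid M Pol a bb P v i - resid M Pol a bb P (vs (N1+N2)%nat) i
                   <= K * d (N1 + N2)%nat).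
      { unfold resid. generalize (Aabs P i (fun j => vs (N1+N2)%nat j - v j) Hi).
        rewrite mv_minus. intros h. apply Rabs_le_both in h. unfold d. lra. }
      assert (E2 : resid M Pol a bb P (vs (N1+N2)%nat) i <= s i).
      { destruct (Hs i Hi) as [Hub _]. apply Hub. exists P; reflexivity. }
      specialize (Hle i Hi).
      assert (E4 : resid M Pol a bb (pol l) (vs (N1+N2)%nat) i <= K * (d l + d (N1+N2)%nat)).
      { unfold resid. rewrite <- Hsol by (unfold l; lia). 
        generalize (Aabs (pol l) i (fun j => vs l j - vs (N1+N2)%nat j) Hi).
        rewrite mv_minus. intros h. apply Rabs_le_both in h.
        generalize (Hdiff l (N1+N2)%nat). intros h2.
        assert (K * sumM M (fun j => Rabs (vs l j - vs (N1 + N2)%nat j)) <= K * (d l + d (N1+N2)%nat))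
          by (apply Rmult_le_compat_l; auto). lra. }
      assert (k1 : K * d l <= δ/4) by (apply Kd_small; auto; apply HN1; unfold l; lia).
      assert (k2 : K * d (N1+N2)%nat <= δ/4) by (apply Kd_small; auto; apply HN1; lia).
      assert (k3 : eps l < δ/4) by (apply HN2; unfold l; lia).
      assert (E5 : K * (d l + d (N1+N2)%nat) = K * d l + K * d (N1+N2)%nat) by ring.
      lra.
    - intros b Hb. assert (- b <= 0); [|lra]. apply le0_of_small. intros δ Hδ.
      destruct (cv_small d Hd (δ / (4 * (K + 1)))) as [N1 HN1].
      { apply Rdiv_lt_0_compat; lra. }
      set (l := S N1).
      assert (E1 : resid M Pol a bb (pol l) v i <= b) by (apply Hb; exists (pol l); reflexivity).
      assert (E2 : - (K * d l) <= resid M Pol a bb (pol l) v i).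
      { unfold resid. rewrite <- Hsol by (unfold l; lia).
        generalize (Aabs (pol l) i (fun j => vs l j - v j) Hi).
        rewrite mv_minus. intros h. apply Rabs_le_both in h. unfold d. lra. }
      assert (k1 : K * d l <= δ/4) by (apply Kd_small; auto; apply HN1; unfold l; lia).
      lra. }
  assert (Hle : forall w1 w2, bellman_sol M Pol a bb w1 -> bellman_sol M Pol a bb w2 ->
            forall i, (i<M)%nat -> w1 i <= w2 i).
  { intros w1 w2 H1 H2 i Hi. assert (w1 i - w2 i <= 0); [|lra].
    apply (le0_of_smallG _ G HG). intros δ Hδ.
    destruct (near_opt M Pol a bb (pol O) w1 δ H1 Hδ) as [P HP].
    apply (Bnd P (fun j => w1 j - w2 j) δ); [|lra|auto].
    intros k Hk. rewrite mv_minus. specialize (HP k Hk).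
    assert (resid M Pol a bb P w2 k <= 0).
    { destruct (H2 k Hk) as [Hub _]. apply Hub. exists P; reflexivity. }
    unfold resid in *. lra. }
  exists v. split; [exact Hbell|split; [|exact Hv]].
  intros w Hw i Hi. apply Rle_antisym; apply Hle; auto.
Qed.

Module MX.
From mathcomp Require Import all_boot all_algebra.
From mathcomp Require Import Rstruct.
Import GRing.Theory.
Section MXS.
Local Open Scope ring_scope.
Lemma sumM_big (M : nat) (f : nat -> R) : sumM M f = \sum_(j < M) f j.
Proof.
rewrite /sumM -(big_mkord xpredT) /index_iota subn0.
have -> : List.seq 0 M = iota 0 M.
  elim: M 0%N => //= n IH k; by rewrite IH.
elim: (iota 0 M) => [|x s IH]; first by rewrite big_nil.
by rewrite big_cons /= IH.
Qed.

Lemma mono_nonsing (M : nat) (A : nat -> nat -> R) :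
  monotone_mx M A -> nonsingular M A.
Proof.
case: M => [|n] Hm; first by exists (fun _ _ => 0) => i k Hi; exfalso; lia.
pose At : 'M[R]_n.+1 := \matrix_(i, j) A j i.
have Hinj : forall u : 'rV[R]_n.+1, u *m At = 0 -> u = 0.
  move=> u Hu.
  pose w := fun j => u ord0 (inord j).
  have Hz : forall i, (i < n.+1)%coq_nat -> mv n.+1 A w i = 0.
    move=> i /ltP Hi; rewrite /mv sumM_big.
    have H := congr1 (fun m : 'rV[R]_n.+1 => m ord0 (inord i)) Hu; rewrite !mxE /= in H.
    apply: etrans H; apply: eq_bigr => j _; rewrite mxE /w inord_val inordK //.
    by rewrite mulrC.
  have H1 := Hm w (fun i Hi => eq_ind_r (fun x => Rle 0 x) (Rle_refl 0) (Hz i Hi)).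
  have H2 := Hm (fun j => Ropp (w j)) (fun i Hi => eq_ind_r (fun x => Rle 0 x) (Rle_refl 0)
     (etrans (mv_opp _ _ _ _) (eq_ind_r (fun x => Ropp x = 0%R) Ropp_0 (Hz i Hi)))).
  apply/rowP => j; rewrite !mxE.
  have Hj : (j < n.+1)%coq_nat by apply/ltP.
  have := H1 _ Hj; have := H2 _ Hj; rewrite /w inord_val => h1 h2.
  apply: Rle_antisym => //; apply: Ropp_le_cancel; rewrite Ropp_0; exact: h1.
have Hu : At \in unitmx by rewrite -row_free_unit; apply: inj_row_free.
exists (fun i j => invmx At (inord j) (inord i)).
move=> i k /ltP Hi /ltP Hk.
have Hid : (1%:M : 'M[R]_n.+1) (inord k) (inord i) = idm i k.
  rewrite mxE /idm; case: (Nat.eqb_spec i k) => [->|Hne]; first by rewrite eqxx.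
  case: eqP => // /(congr1 val); rewrite /= !inordK // => E; by case: Hne.
split.
- rewrite -Hid -(mulVmx Hu) /mm sumM_big !mxE; apply: eq_bigr => j _.
  by rewrite !mxE inord_val inordK // mulrC.
- rewrite -Hid -(mulmxV Hu) /mm sumM_big !mxE; apply: eq_bigr => j _.
  by rewrite !mxE inord_val inordK // mulrC.
Qed.
End MXS.
End MX.

Open Scope R_scope.

Theorem theoremA3
  (M : nat) (Pol : nat -> Type)
  (a : forall i, Pol i -> nat -> R) (bb : forall i, Pol i -> R)
  (Hne : forall i, inhabited (Pol i))
  (HH0 : H0 M Pol a)
  (Hbd : bounded_data M Pol a bb)
  (Hmono : forall P : forall i, Pol i, monotone_mx M (Amat Pol a P))
  (eps : nat -> R)
  (Heps_pos : forall l, (1 <= l)%nat -> 0 < eps l)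
  (Heps_sum : exists sig, infinite_sum (fun n => eps (S n)) sig)
  (pol : nat -> forall i, Pol i) (vs : nat -> nat -> R)
  (Hiter : eps_policy_iteration M Pol a bb eps pol vs) :
  exists v : nat -> R,
    bellman_sol M Pol a bb v /\
    (forall w, bellman_sol M Pol a bb w -> forall i, (i < M)%nat -> w i = v i) /\
    (forall i, (i < M)%nat -> Un_cv (fun l => vs l i) (v i)).
Proof.
  destruct M as [|M].
  - exists (fun _ => 0). split; [|split]; intros; try lia.
    intros i Hi; lia.
  - refine (main_lemma (S M) Pol a bb _ HH0 Hbd Hmono eps Heps_pos Heps_sum pol vs Hiter _).
    + intros P. apply MX.mono_nonsing. apply Hmono.
    + lia.
Qed.
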